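(* Let $f\in\mathbf{SB}_n$ be nonconstant. Then $\deg(f)\ge 2^{\lceil\log_2\mathcal{AI}(f)\rceil}=2^{\lfloor\log_2(2\mathcal{AI}(f)-1)\rfloor}$.
   Context: $\mathbf{SB}_n$ is the set of symmetric Boolean functions on $n$ variables; $\deg$ is the algebraic degree. The algebraic immunity is $\mathcal{AI}(f)=\min\{\deg(g): g\neq0,\ gf=0 \text{ or } g(f+1)=0\}$. *)

(* Defs.v *)
From mathcomp Require Import all_boot fingroup perm.
Set Implicit Arguments. Unset Strict Implicit. Unset Printing Implicit Defensive.

Definition bvec (n : nat) := {ffun 'I_n -> bool}.

Definition boolfun (n : nat) := {ffun bvec n -> bool}.

(* ANF coefficient of the monomial prod_{i in S} x_i (Moebius transform):
   a_S = XOR_{x : supp x \subseteq S} f(x). *)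
Definition anf_coef n (f : boolfun n) (S : {set 'I_n}) : bool :=
  \big[addb/false]_(x : bvec n | [forall i, x i ==> (i \in S)]) f x.

(* Algebraic degree: max size of a monomial with nonzero ANF coefficient
   (0 for the zero function). *)
Definition deg n (f : boolfun n) : nat :=
  \max_(S : {set 'I_n} | anf_coef f S) #|S|.

Definition sym_bf n (f : boolfun n) : Prop :=
  forall (s : {perm 'I_n}) (x : bvec n), f [ffun i => x (s i)] = f x.

Definition constant_bf n (f : boolfun n) : Prop :=
  exists b : bool, forall x, f x = b.

(* g is a nonzero annihilator of f or of f+1. *)
Definition ai_witness n (f g : boolfun n) : bool :=
  [exists x, g x] &&
  ([forall x, ~~ (g x && f x)] || [forall x, ~~ (g x && ~~ f x)]).

(* Algebraic immunity: minimum degree of such g (default n, never attained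
   as a default for nonconstant f, since g = f+1 is a witness). *)
Definition AI n (f : boolfun n) : nat :=
  \big[minn/n]_(g : boolfun n | ai_witness f g) deg g.

(* Main.v *)
Require Import Defs.
From mathcomp Require Import all_boot fingroup perm.
From Stdlib Require Import Lia.
Set Implicit Arguments. Unset Strict Implicit. Unset Printing Implicit Defensive.

Definition Dl (h : nat -> bool) : nat -> bool := fun k => h k (+) h k.+1.
Notation It s h := (iter s Dl h).

Lemma It_loc i : forall j g1 g2, (forall k, k <= i -> g1 (j+k) = g2 (j+k)) ->
  It i g1 j = It i g2 j.
Proof.
elim: i => [|i IH] j g1 g2 H /=.
  by have := H 0 (leqnn 0); rewrite addn0.
rewrite /Dl (IH j g1 g2) ?(IH j.+1 g1 g2) //.
  by move=> k Hk; rewrite addSnnS; apply: H.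
by move=> k Hk; apply: H; apply: leqW.
Qed.

Lemma It_zero i : forall g j, (forall k, g k = false) -> It i g j = false.
Proof.
elim: i => [|i IH] g j H /=; first exact: H.
by rewrite /Dl !IH.
Qed.

Lemma It_shift s : forall q k, It s (fun k => q k.+1) k = It s q k.+1.
Proof.
elim: s => [|s IH] q k //=.
by rewrite /Dl !IH.
Qed.

Lemma It_const N g c i : (forall k, k <= N -> g k = c) -> 0 < i -> i <= N ->
  It i g 0 = false.
Proof.
move=> H; case: i => [//|i] _ Hi.
rewrite (@It_loc i.+1 0 g (fun _ => c)); last first.
  by move=> k Hk; rewrite add0n H // (leq_trans Hk Hi).
by rewrite iterSr It_zero // => k; rewrite /Dl addbb.
Qed.

Lemma It_P2 k : forall h, (forall i, i <= k -> It i h 0 = false) -> h k = false.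
Proof.
elim: k => [|k IH] h H; first exact: (H 0 (leqnn 0)).
have H1 : h k = false by apply: IH => i Hi; apply: H; apply: leqW.
have H2 : Dl h k = false.
  by apply: IH => i Hi; rewrite -iterSr; apply: H.
by move: H2; rewrite /Dl H1.
Qed.

Lemma It_pow2 u : forall h j, It (2^u) h j = h j (+) h (j + 2^u).
Proof.
elim: u => [|u IH] h j; first by rewrite /= addn1.
rewrite expnS mul2n -addnn iterD IH !IH addnA.
by case: (h j); case: (h (j + 2^u)); case: (h (j + 2^u + 2^u)).
Qed.

Lemma It_per t n h : (forall s, 2^t <= s <= n -> It s h 0 = false) ->
  forall k, k + 2^t <= n -> h (k + 2^t) = h k.
Proof.
move=> H k Hk.
have : It (2^t) h k = false.
  apply: (@It_P2 k (It (2^t) h)) => i Hi.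
  rewrite -iterD; apply: H; rewrite leq_addl /=.
  by apply: leq_trans Hk; rewrite leq_add2r.
by rewrite It_pow2; case: (h k); case: (h (k + 2^t)).
Qed.

Definition wt n (x : bvec n) := #|[set i | x i]|.
Definition flip n (j : 'I_n) (x : bvec n) : bvec n :=
  [ffun i => if i == j then ~~ x i else x i].

Lemma flipK n (j : 'I_n) : involutive (flip j).
Proof. by move=> x; apply/ffunP=> i; rewrite !ffunE; case: (i == j) => //; rewrite negbK. Qed.

Lemma wt_flip n (j : 'I_n) (y : bvec n) : y j = false -> wt (flip j y) = (wt y).+1.
Proof.
move=> yj; rewrite /wt.
have -> : [set i | flip j y i] = j |: [set i | y i].
  apply/setP=> i; rewrite in_setU1 !inE ffunE.
  by case: eqP => [->|]; rewrite ?yj.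
by rewrite cardsU1 inE yj.
Qed.

Lemma anfSF n (q : nat -> bool) (S : {set 'I_n}) :
  \big[addb/false]_(x : bvec n | [forall i, x i ==> (i \in S)]) q (wt x) = It #|S| q 0.
Proof.
move Hs: #|S| => s; elim: s S q Hs => [|s IH] S q Hs.
  rewrite (cards0_eq Hs) (@big_pred1 _ _ _ _ [ffun => false]).
    rewrite /= /wt.
    have -> : [set i | ([ffun=> false] : bvec n) i] = set0 by apply/setP=> i; rewrite !inE ffunE.
    by rewrite cards0.
  move=> x /=; apply/forallP/eqP.
    move=> H; apply/ffunP=> i; rewrite ffunE; have := H i; rewrite inE; by case: (x i).
  by move=> -> i; rewrite ffunE.
have : 0 < #|S| by rewrite Hs.
case/card_gt0P => j jS.
have HS' : #|S :\ j| = s by move: Hs; rewrite (cardsD1 j) jS add1n => -[].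
rewrite (bigID (fun x : bvec n => x j)) /=.
have -> : \big[addb/false]_(x : bvec n | [forall i, x i ==> (i \in S)] && ~~ x j) q (wt x)
        = It s q 0.
  rewrite -(IH (S :\ j) q HS'); apply: eq_bigl => x.
  apply/andP/forallP.
    case=> /forallP H xj i; rewrite !inE; apply/implyP=> xi.
    rewrite (implyP (H i) xi) andbT; apply/eqP=> eij; move: xj; by rewrite -eij xi.
  move=> H; have xj : ~~ x j by apply/negP=> xj; have := H j; rewrite xj !inE eqxx.
  split=> //; apply/forallP=> i; apply/implyP=> xi; have := implyP (H i) xi.
  by rewrite !inE => /andP[].
rewrite (reindex_inj (inv_inj (@flipK n j))) /=.
have -> : \big[addb/false]_(x : bvec n | [forall i, flip j x i ==> (i \in S)] && flip j x j)
            q (wt (flip j x))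
        = \big[addb/false]_(x : bvec n | [forall i, x i ==> (i \in S :\ j)])
            (fun k => q k.+1) (wt x).
  apply: eq_big => x.
    apply/andP/forallP.
      case=> /forallP H; rewrite ffunE eqxx => xj i; apply/implyP=> xi.
      rewrite !inE; have := H i; rewrite ffunE.
      case: eqP => [eij|_ /implyP/(_ xi) -> //]; by move: xj; rewrite -eij xi.
    move=> H; have xj : ~~ x j by apply/negP=> xj; have := H j; rewrite xj !inE eqxx.
    rewrite ffunE eqxx xj; split=> //; apply/forallP=> i; rewrite ffunE.
    case: eqP => [->|_]; first by rewrite jS implybT.
    by apply/implyP=> xi; have := implyP (H i) xi; rewrite !inE => /andP[].
  move=> /andP[_]; rewrite ffunE eqxx => xj.
  by rewrite wt_flip //; move: xj; case: (x j).
have E := IH _ (fun k => q k.+1) HS'; rewrite /= in E.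
by rewrite E It_shift /= /Dl addbC.
Qed.

Lemma symwt n (f : boolfun n) : sym_bf f ->
  forall x y : bvec n, wt x = wt y -> f x = f y.
Proof.
move=> Hf x y; move Hd: #|[set i | x i && ~~ y i]| => d.
elim/ltn_ind: d x Hd => d IH x Hd Hw.
case: (posnP d) => [d0|dpos].
  have Hsub : [set i | x i] \subset [set i | y i].
    apply/subsetP=> i; rewrite !inE => xi; apply/negPn/negP=> yi.
    have : i \in [set i | x i && ~~ y i] by rewrite inE xi yi.
    by rewrite (cards0_eq (etrans Hd d0)) inE.
  have /eqP Heq : [set i | x i] == [set i | y i] by rewrite eqEcard Hsub /= -/(wt y) -/(wt x) Hw.
  suff -> : x = y by []; apply/ffunP=> i.
  by have := congr1 (fun A : {set _} => i \in A) Heq; rewrite /= !inE.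
have : 0 < #|[set i | x i && ~~ y i]| by rewrite Hd.
case/card_gt0P => i; rewrite inE => /andP[xi yi].
have [j /andP[yj xj]] : exists j, y j && ~~ x j.
  case: (pickP (fun k => y k && ~~ x k)) => [j Hj|H]; first by exists j.
  have : [set k | y k] \proper [set k | x k].
    apply/properP; split.
      apply/subsetP=> k; rewrite !inE => yk; have := H k; rewrite /= yk /=.
      by move/negbFE.
    by exists i; rewrite !inE.
  by move/proper_card; rewrite -/(wt y) -/(wt x) Hw ltnn.
pose x' : bvec n := [ffun k => x (tperm i j k)].
have fx : f x' = f x by apply: Hf.
have wx : wt x' = wt x.
  rewrite /wt -(card_preimset [set k | x k] (@perm_inj _ (tperm i j))).
  by apply: eq_card => k; rewrite !inE /x' ffunE.
rewrite -fx; apply: (IH #|[set k | x' k && ~~ y k]|) => //; last by rewrite wx.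
rewrite -Hd; apply: (@leq_ltn_trans #|[set k | x k && ~~ y k] :\ i|).
  apply: subset_leq_card; apply/subsetP=> k; rewrite !inE ffunE.
  case: (eqVneq k i) => [->|ki]; first by rewrite tpermL (negbTE xj).
  case: (eqVneq k j) => [->|kj]; first by rewrite yj andbF.
  by rewrite tpermD // eq_sym.
by rewrite (cardsD1 i [set k | x k && ~~ y k]) inE xi yi.
Qed.

Definition xk n (k : nat) : bvec n := [ffun i : 'I_n => i < k].

Lemma wt_xk n k : k <= n -> wt (xk n k) = k.
Proof.
elim: k => [|k IH] Hk.
  by rewrite /wt; apply/eqP; rewrite cards_eq0; apply/eqP/setP=> i; rewrite !inE ffunE.
rewrite /wt; have -> : [set i | xk n k.+1 i] = (Ordinal Hk) |: [set i | xk n k i].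
  by apply/setP=> i; rewrite in_setU1 !inE !ffunE ltnS leq_eqVlt -val_eqE.
by rewrite cardsU1 inE ffunE ltnn -/(wt _) IH // ltnW.
Qed.

Lemma wt_le n (x : bvec n) : wt x <= n.
Proof. by apply: leq_trans (max_card _) _; rewrite card_ord. Qed.

Section Main.
Variables (n : nat) (f : boolfun n).
Hypothesis Hf : sym_bf f.
Let h k := f (xk n k).

Lemma fh x : f x = h (wt x).
Proof. by apply: symwt => //; rewrite wt_xk // wt_le. Qed.

Lemma anf_q (q : nat -> bool) S :
  anf_coef [ffun x : bvec n => q (wt x)] S = It #|S| q 0.
Proof. by rewrite /anf_coef (eq_bigr (fun x => q (wt x))) ?anfSF // => x _; rewrite ffunE. Qed.

Lemma anf_f S : anf_coef f S = It #|S| h 0.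
Proof. by rewrite /anf_coef (eq_bigr (fun x => h (wt x))) ?anfSF // => x _; rewrite fh. Qed.

Lemma deg_small D : deg f < D -> forall s, D <= s <= n -> It s h 0 = false.
Proof.
move=> Hd s /andP[Ds sn]; apply/negP=> Hs.
have HS : #|[set i | xk n s i]| = s by rewrite -/(wt _) wt_xk.
have : anf_coef f [set i | xk n s i] by rewrite anf_f HS.
move/(leq_bigmax_cond (F := fun S : {set 'I_n} => #|S|)); rewrite -/(deg f) HS => sd.
by have := leq_ltn_trans sd Hd; rewrite ltnNge Ds.
Qed.

Lemma mod2 m k : 0 < m -> k %% (m + m) = k %% m \/ k %% (m + m) = k %% m + m.
Proof.
move=> mpos; have Hv : k %% (m + m) %% m = k %% m.
  by apply: modn_dvdm; rewrite dvdn_add ?dvdnn.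
have vlt : k %% (m + m) < m + m by rewrite ltn_pmod // addn_gt0 mpos.
case: (ltnP (k %% (m + m)) m) => [vm|vm].
  by left; rewrite -Hv (modn_small vm).
right; rewrite -Hv; set v := k %% (m + m).
have E : v = (v - m) + m by rewrite subnK.
rewrite {2}E modnDr modn_small ?subnK //.
by rewrite ltn_subLR.
Qed.

Lemma main_lemma u : ~ constant_bf f -> deg f < 2 ^ u.+1 ->
  exists g, ai_witness f g && (deg g <= 2 ^ u).
Proof.
move=> Hnc Hd.
have H0 := deg_small Hd.
have Per := It_per H0.
have M2 : 2 ^ u.+1 = 2 ^ u + 2 ^ u by rewrite expnS mul2n addnn.
have mpos : 0 < 2 ^ u by rewrite expn_gt0.
have hmod : forall k, k <= n -> h k = h (k %% 2 ^ u.+1).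
  elim/ltn_ind=> k IH kn.
  case: (ltnP k (2 ^ u.+1)) => [kM|kM]; first by rewrite modn_small.
  have E := Per (k - 2 ^ u.+1); rewrite subnK // in E.
  rewrite E // IH; last by apply: leq_trans (leq_subr _ _) kn.
    by rewrite -{2}(subnK kM) modnDr.
  by rewrite ltn_subrL expn_gt0 /= (leq_trans _ kM) // expn_gt0.
case: (boolP [exists r : 'I_(2 ^ u), (r <= n) &&
   [forall k : 'I_n.+1, (k %% 2 ^ u == r) ==> (h k == h r)]]).
  case/existsP=> r /andP[rn /forallP Hr].
  have Hr' : forall x : bvec n, wt x %% 2 ^ u = r -> h (wt x) = h r.
    move=> x Hx; have := Hr (@Ordinal n.+1 (wt x) (wt_le x)).
    by rewrite /= Hx eqxx /= => /eqP.
  exists [ffun x => wt x %% 2 ^ u == r]; apply/andP; split.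
    apply/andP; split.
      by apply/existsP; exists (xk n r); rewrite ffunE wt_xk // modn_small.
    case Ehr: (h r); [apply/orP; right | apply/orP; left];
      apply/forallP=> x; rewrite ffunE fh; apply/negP=> /andP[/eqP Hx];
      by rewrite Hr' // Ehr.
  apply/bigmax_leqP => S HS.
  rewrite leqNgt; apply/negP=> Hlt; move: HS.
  rewrite (anf_q (fun k => k %% 2 ^ u == r)) -(subnK (ltnW Hlt)) iterD It_zero // => k.
  by rewrite It_pow2 modnDr addbb.
rewrite negb_exists => /forallP HB.
have HB' : forall r, r < 2 ^ u -> r <= n ->
    exists k, [/\ k <= n, k %% 2 ^ u = r & h k != h r].
  move=> r rm rn; have := HB (Ordinal rm); rewrite /= rn /= negb_forall.
  case/existsP=> k; rewrite negb_imply => /andP[/eqP kr hk].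
  by exists k; split=> //; have := ltn_ord k.
have Hnext : forall k, k + 2 ^ u <= n -> h (k + 2 ^ u) = ~~ h k.
  move=> k kn; set r := k %% 2 ^ u.
  have rm : r < 2 ^ u by rewrite ltn_pmod.
  have rn : r <= n.
    by apply: leq_trans (leq_mod _ _) (leq_trans (leq_addr _ _) kn).
  have [rmn hrm] : r + 2 ^ u <= n /\ h (r + 2 ^ u) = ~~ h r.
    have [k2 [k2n k2r hk2]] := HB' _ rm rn.
    have E2 := hmod _ k2n; rewrite M2 in E2.
    case: (mod2 k2 mpos) => Hc; rewrite Hc k2r in E2.
      by rewrite E2 eqxx in hk2.
    split; first by rewrite -k2r -Hc; apply: leq_trans (leq_mod _ _) k2n.
    by rewrite -E2; move: hk2; case: (h k2); case: (h r).
  have Ek := hmod _ (leq_trans (leq_addr _ _) kn).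
  have Ekm := hmod _ kn.
  rewrite M2 in Ek Ekm.
  case: (mod2 k mpos) => Hc; rewrite Hc -/r in Ek.
    rewrite Ekm -modnDml Hc -/r modn_small ?hrm ?Ek //.
    by rewrite ltn_add2r.
  rewrite Ekm -modnDml Hc -/r -addnA modnDr modn_small; last first.
    by apply: leq_trans rm (leq_addr _ _).
  by rewrite Ek hrm negbK.
exists f; apply/andP; split.
  apply/andP; split.
    case: (pickP (fun x => f x)) => [x fx|H]; first by apply/existsP; exists x.
    by case: Hnc; exists false.
  by apply/orP; right; apply/forallP=> x; case: (f x).
apply/bigmax_leqP => S HS.
rewrite leqNgt; apply/negP=> Hlt; move: HS; rewrite anf_f.
have sn : #|S| <= n by apply: leq_trans (max_card _) _; rewrite card_ord.
have mn : 2 ^ u <= n by apply: leq_trans (ltnW Hlt) sn.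
rewrite -(subnK (ltnW Hlt)) iterD (@It_const (n - 2 ^ u) _ true).
- by [].
- move=> k kn; rewrite It_pow2 Hnext; first by case: (h k).
  by rewrite -(subnK mn) leq_add2r.
- by rewrite subn_gt0.
- by apply: leq_sub2r.
Qed.

End Main.

Lemma bigmin_le (I : eqType) (r : seq I) (P : pred I) (F : I -> nat) d i :
  i \in r -> P i -> \big[minn/d]_(j <- r | P j) F j <= F i.
Proof.
elim: r => [//|a r IH]; rewrite in_cons big_cons => /orP[/eqP <-|ir] Pi.
  by rewrite Pi geq_minl.
case: (P a); last exact: IH.
by rewrite geq_min IH ?orbT.
Qed.

Lemma AI_le n (f g : boolfun n) : ai_witness f g -> AI f <= deg g.
Proof. by move=> Hg; rewrite /AI; apply: bigmin_le => //; apply: mem_index_enum. Qed.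

Lemma logs a : up_log 2 a = trunc_log 2 (2 * a - 1).
Proof.
case: (leqP a 1) => [|a1].
  by case: a => [|[|]] //; rewrite ?up_log0 ?up_log1 ?trunc_log0 ?trunc_log1.
have e0 : 0 < up_log 2 a by rewrite up_log_gt0.
have H1 := up_log_gtn (isT : 1 < 2) a1.
have H2 := @up_logP 2 a (isT : 1 < 2).
move: e0 H1 H2; case: (up_log 2 a) => [//|e] _ /= H1 H2.
symmetry; apply: trunc_log_eq => //.
move: H1 H2; rewrite !expnS; move: (2 ^ e) => X H1 H2.
move/ltP: H1 => H1; move/leP: H2 => H2; apply/andP; split; apply/leP;
  rewrite -?multE -?minusE in H1 H2 *; lia.
Qed.

Theorem corollary8 (n : nat) (f : boolfun n) :
  sym_bf f -> ~ constant_bf f ->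
  2 ^ up_log 2 (AI f) <= deg f /\
  2 ^ up_log 2 (AI f) = 2 ^ trunc_log 2 (2 * AI f - 1).
Proof.
move=> Hf Hnc; split; last by rewrite logs.
case E: (up_log 2 (AI f)) => [|u].
  rewrite expn0 lt0n; apply/negP=> /eqP d0.
  have Hd : deg f < 2 ^ 0 by rewrite d0.
  have Per := It_per (deg_small Hf Hd).
  have Hc : forall k, k <= n -> f (xk n k) = f (xk n 0).
    elim=> [//|k IH] kn; rewrite -addn1 (Per k) ?addn1 // IH //.
    exact: ltnW.
  apply: Hnc; exists (f (xk n 0)) => x.
  by rewrite (fh Hf) Hc // wt_le.
rewrite leqNgt; apply/negP=> Hd.
have [g /andP[Hg dg]] := main_lemma Hf Hnc Hd.
have := leq_trans (AI_le Hg) dg.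
move/(up_log_min (isT : 1 < 2)); rewrite E ltnn.
done.
Qed.
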